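(* Let $D$ and $D'$ be finite subsets of $[0,1]\times\mathbb{R}$ (the fitting and external datasets) such that the inputs of all samples in $D\cup D'$ are pairwise distinct. Let $\epsilon>0$. Then there exist a subset $A\subseteq D'$ and $a>0$ such that the TNN constructed from the dataset $D\cup A$ (with parameter $a$) satisfies $|y-TNN(x)|<\epsilon$ for every $(x,y)\in D\cup D'$. In particular, all samples of $D$ remain approximated within $\epsilon$ after the model is rebuilt with the added samples of $A$.
   Context: Let $\sigma(t)=1/(1+e^{-t})$. For a finite dataset $\{(x^{(k)},y^{(k)})\}_{k=1}^N\subset[0,1]\times\mathbb{R}$ with pairwise distinct inputs, index it so that $x^{(1)}>x^{(2)}>\dots>x^{(N)}$. Set $\Delta^{(k)}=x^{(k)}-x^{(k+1)}$ for $k<N$ and let $\Delta^{(N)}>0$ be an arbitrary fixed positive number. For $a>0$ put $W_{N-k+1}=2a/\Delta^{(k)}$, $b_{N-k+1}=a-W_{N-k+1}x^{(k)}$, $\alpha_i=y^{(N-i+1)}-y^{(N-i+2)}$ (with $y^{(N+1)}:=0$), and define the TNN constructed from this dataset as $TNN(x)=\sum_{i=1}^N\alpha_i\sigma(W_ix+b_i)$. *)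

(* Defs.v *)
From HB Require Import structures.
From mathcomp Require Import all_boot all_order all_algebra.
From mathcomp Require Import all_classical all_reals all_analysis.
Set Implicit Arguments. Unset Strict Implicit. Unset Printing Implicit Defensive.
Import Order.TTheory GRing.Theory Num.Theory.
Local Open Scope ring_scope.

Definition sigmoid {R : realType} (t : R) : R := 1 / (1 + expR (- t)).

(* Sort the dataset so that inputs are strictly decreasing: x^(1) > ... > x^(N)
   (0-indexed here: position k holds x^(k+1)). *)
Definition sort_dec {R : realType} (D : seq (R * R)) : seq (R * R) :=
  sort (fun p q : R * R => q.1 <= p.1) D.

(* TNN built from dataset D, with parameter a and the fixed positive
   Delta^(N) = dN.  With S the sorted dataset (0-indexed k = paper's k+1):
     Delta_k = x_k - x_{k+1}   (k < N-1),   Delta_{N-1} = dN,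
     W = 2a/Delta_k,  b = a - W x_k,  alpha = y_k - y_{k+1} (y_N := 0).
   The paper's index i = N-k+1 is only a relabelling of the summands. *)
Definition TNN {R : realType} (dN a : R) (D : seq (R * R)) (x : R) : R :=
  let S := sort_dec D in
  let N := size S in
  let xs k := (nth (0, 0) S k).1 in
  let ys k := (nth (0, 0) S k).2 in
  \sum_(k < N)
    let Delta := if (k.+1 < N)%N then xs k - xs k.+1 else dN in
    let W := 2 * a / Delta in
    let b := a - W * xs k in
    let alpha := ys k - (if (k.+1 < N)%N then ys k.+1 else 0) in
    alpha * sigmoid (W * x + b).

(* Main.v *)
Require Import Defs.
From HB Require Import structures.
From mathcomp Require Import all_boot all_order all_algebra.
From mathcomp Require Import all_classical all_reals all_analysis.
From mathcomp Require Import lra.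
Import Order.TTheory GRing.Theory Num.Theory.
Local Open Scope ring_scope.
Set Implicit Arguments. Unset Strict Implicit.

Section S.
Variable R : realType.

Lemma sig_fact (t : R) : 0 < sigmoid t /\ sigmoid t * (1 + expR (- t)) = 1.
Proof.
have he := expR_gt0 (- t).
rewrite /sigmoid; split; first by rewrite mul1r invr_gt0; lra.
by rewrite mul1r mulVf //; apply/eqP => h; lra.
Qed.

Lemma sig_ge (a t : R) : a <= t -> `|1 - sigmoid t| <= expR (- a).
Proof.
move=> hat; have [hp hm] := sig_fact t.
have he := expR_gt0 (- t).
have hle : expR (- t) <= expR (- a) by rewrite ler_expR lerN2.
have h1 : sigmoid t <= 1 by nra.
rewrite ger0_norm; last lra.
nra.
Qed.

Lemma sig_le (a t : R) : t <= - a -> `|sigmoid t| <= expR (- a).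
Proof.
move=> hat; have [hp hm] := sig_fact t.
have he := expR_gt0 (- t).
have hE := expR_gt0 t.
have hEe : expR t * expR (- t) = 1 by rewrite -expRD subrr expR0.
have hle : expR t <= expR (- a) by rewrite ler_expR.
rewrite ger0_norm; last lra.
nra.
Qed.

Lemma final (M eps : R) : 0 <= M -> 0 < eps ->
  M * expR (- ((M + 1) / eps)) < eps.
Proof.
move=> hM he; set a := (M + 1) / eps.
have ha : a * eps = M + 1 by rewrite /a mulfVK //; apply/eqP => h; lra.
have e0 := expR_gt0 (- a).
have h1 := expR_ge1Dx a.
have hEe : expR a * expR (- a) = 1 by rewrite -expRD subrr expR0.
have h2 : expR (- a) * (1 + a) <= 1 by nra.
nra.
Qed.

Definition xs (S : seq (R*R)) k := (nth (0, 0) S k).1.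
Definition ys (S : seq (R*R)) k := (nth (0, 0) S k).2.
Definition alph (S : seq (R*R)) (k:nat) :=
  ys S k - (if (k.+1 < size S)%N then ys S k.+1 else 0).
Definition delta (dN : R) (S : seq (R*R)) (k : nat) :=
  if (k.+1 < size S)%N then xs S k - xs S k.+1 else dN.
Definition tk (dN a : R) S (x : R) k :=
  (2 * a / delta dN S k) * x + (a - (2 * a / delta dN S k) * xs S k).
Definition Msum (S : seq (R*R)) := \sum_(k < size S) `|alph S k|.

Lemma TNN_eq dN a D x : TNN dN a D x =
  \sum_(k < size (sort_dec D)) alph (sort_dec D) k * sigmoid (tk dN a (sort_dec D) x k).
Proof. by []. Qed.

Lemma tele (S : seq (R*R)) j : (j < size S)%N ->
  \sum_(k < size S) alph S k * (j <= k)%:R = ys S j.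
Proof.
move=> hj.
rewrite -(big_mkord xpredT (fun k => alph S k * (j <= k)%:R)).
rewrite (big_cat_nat (n:=j) (leq0n j) (ltnW hj)) /=.
rewrite big_nat_cond big1 ?add0r; last first.
  by move=> i /andP[/andP[_ hi] _]; rewrite leqNgt hi mulr0.
pose f k := if (k < size S)%N then ys S k else 0.
rewrite (@eq_big_nat _ _ _ j (size S) _ (fun k => (- f k.+1) - (- f k))); last first.
  move=> i /andP[hji hi]; rewrite hji mulr1 /alph /f hi opprK addrC.
  by case: ifP.
rewrite telescope_sumr ?(ltnW hj) // /f ltnn hj; lra.
Qed.

Lemma sorted_dec (S : seq (R*R)) i k : sorted (fun p q : R*R => q.1 <= p.1) S ->
  (i < size S)%N -> (k < size S)%N -> (i <= k)%N -> xs S k <= xs S i.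
Proof.
move=> hso hi hk hik.
have tr : transitive (fun p q : R*R => q.1 <= p.1).
  move=> x y z /= h1 h2; exact: le_trans h2 h1.
have rf : reflexive (fun p q : R*R => q.1 <= p.1) by move=> x /=.
exact: (sorted_leq_nth tr rf (0,0) hso).
Qed.

Arguments sorted_dec {S i k}.
Lemma sorted_str (S : seq (R*R)) i k : sorted (fun p q : R*R => q.1 <= p.1) S ->
  uniq (map fst S) ->
  (i < size S)%N -> (k < size S)%N -> (i < k)%N -> xs S k < xs S i.
Proof.
move=> hso hu hi hk hik.
rewrite lt_neqAle sorted_dec ?(ltnW hik) // andbT.
have hi' : (i < size (map fst S))%N by rewrite size_map.
have hk' : (k < size (map fst S))%N by rewrite size_map.
have := nth_uniq 0 hi' hk' hu.
rewrite !(nth_map (0,0)) // => E.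
by rewrite /xs eq_sym E neq_ltn hik.
Qed.

Arguments sorted_str {S i k}.
Lemma term_bound (dN a : R) (S : seq (R*R)) j k : 0 < dN -> 0 < a ->
  sorted (fun p q : R*R => q.1 <= p.1) S -> uniq (map fst S) ->
  (j < size S)%N -> (k < size S)%N ->
  `|(j <= k)%:R - sigmoid (tk dN a S (xs S j) k)| <= expR (- a).
Proof.
move=> hdN ha hso hu hj hk.
have hd : 0 < delta dN S k.
  rewrite /delta; case: ifP => // hk1.
  by rewrite subr_gt0 (sorted_str hso hu) // ltnSn.
have hW : 0 < 2 * a / delta dN S k by rewrite divr_gt0 // mulr_gt0.
have tkE : tk dN a S (xs S j) k = 2 * a / delta dN S k * (xs S j - xs S k) + a.
  rewrite /tk; lra.
case: (leqP j k) => hjk.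
  rewrite mulr1n; apply: sig_ge; rewrite tkE lerDr.
  apply: mulr_ge0; first exact: ltW.
  by rewrite subr_ge0 (sorted_dec hso).
rewrite mulr0n sub0r normrN; apply: sig_le.
have hk1 : (k.+1 < size S)%N by apply: leq_ltn_trans hj.
have hle : xs S j - xs S k <= - delta dN S k.
  rewrite /delta hk1.
  have := sorted_dec hso hk1 hj hjk; lra.
have : 2 * a / delta dN S k * (xs S j - xs S k) <= 2 * a / delta dN S k * (- delta dN S k).
  by rewrite ler_wpM2l // ltW.
rewrite mulrN divfK; last by rewrite gt_eqF.
rewrite tkE; lra.
Qed.
Arguments tele {S j}.
Lemma main_err (dN a : R) (S : seq (R*R)) j : 0 < dN -> 0 < a ->
  sorted (fun p q : R*R => q.1 <= p.1) S -> uniq (map fst S) -> (j < size S)%N ->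
  `|ys S j - \sum_(k < size S) alph S k * sigmoid (tk dN a S (xs S j) k)|
    <= Msum S * expR (- a).
Proof.
move=> hdN ha hso hu hj.
rewrite -{1}(tele hj) -sumrB /Msum mulr_suml.
apply: le_trans (ler_norm_sum _ _ _) _.
apply: ler_sum => k _.
rewrite -mulrBr normrM ler_wpM2l //.
exact: term_bound.
Qed.
End S.

Theorem proposition2 (R : realType) (D D' : seq (R * R)) (eps dN : R) :
  all (fun p : R * R => (0 <= p.1) && (p.1 <= 1)) (D ++ D') ->
  uniq (map fst (D ++ D')) ->
  0 < eps -> 0 < dN ->
  exists A : seq (R * R), exists a : R,
    subseq A D' /\ 0 < a /\
    forall p, p \in D ++ D' -> `| p.2 - TNN dN a (D ++ A) p.1 | < eps.
Proof.
move=> _ hu he hdN.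
set S := sort_dec (D ++ D').
have hM : 0 <= Msum S by apply: sumr_ge0 => k _.
exists D', ((Msum S + 1) / eps); split; first exact: subseq_refl.
have ha : 0 < (Msum S + 1) / eps by rewrite divr_gt0 //; lra.
split => // p hp.
have hso : sorted (fun p q : R*R => q.1 <= p.1) S.
  by apply: sort_sorted => x y; exact: le_total.
have huS : uniq (map fst S).
  have hperm : perm_eq S (D ++ D') by apply/permPl; exact: perm_sort.
  by rewrite (perm_uniq (perm_map fst hperm)).
have hpS : p \in S by rewrite mem_sort.
have hj : (index p S < size S)%N by rewrite index_mem.
have hpE : p = nth (0,0) S (index p S) by rewrite nth_index.
rewrite TNN_eq -/S {1 2}hpE.
apply: le_lt_trans (main_err hdN ha hso huS hj) _.
exact: final.
Qed.
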